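(* Let $n,p$ be positive integers, $X\in\mathbb{R}^{n\times p}$, $\mathbf y\in\mathbb{R}^n$ and $\delta>0$, and let $\mathbf t\in[0,1)^p$. Then \[ (L_{\mathbf t})_{+}=\frac1n\left[(T_{\mathbf t})_{+}(X^\top X)_{+}(T_{\mathbf t})_{+}+\delta\big(I-(T_{\mathbf t})_{+}^2\big)\right]. \] Furthermore: (i) $(L_{\mathbf t}^{-1})_0=\frac{n}{\delta}I$ and $(L_{\mathbf t}^{-1})_{+}=\big((L_{\mathbf t})_{+}\big)^{-1}$; (ii) $(\widetilde{\boldsymbol\beta}_{\mathbf t})_0=\mathbf 0$ and $(\widetilde{\boldsymbol\beta}_{\mathbf t})_{+}=\big((L_{\mathbf t})_{+}\big)^{-1}\left((\mathbf t)_{+}\odot\left(\frac{X^\top\mathbf y}{n}\right)_{+}\right)$; (iii) $(\mathbf c_{\mathbf t})_0=\mathbf 0$ and $(\mathbf c_{\mathbf t})_{+}=\big((L_{\mathbf t})_{+}\big)^{-1}\big((\mathbf t)_{+}\odot(\mathbf a_{\mathbf t})_{+}\big)$.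
   Context: For $\mathbf t\in[0,1)^p$, $T_{\mathbf t}=\mathrm{Diag}(t_1,\dots,t_p)$, $X_{\mathbf t}=XT_{\mathbf t}$, $L_{\mathbf t}=\frac1n[X_{\mathbf t}^\top X_{\mathbf t}+\delta(I-T_{\mathbf t}^2)]$ (invertible for such $\mathbf t$), $\widetilde{\boldsymbol\beta}_{\mathbf t}=L_{\mathbf t}^{-1}(X_{\mathbf t}^\top\mathbf y/n)$, $\mathbf a_{\mathbf t}=\frac{X^\top X}{n}(\mathbf t\odot\widetilde{\boldsymbol\beta}_{\mathbf t})-\frac{X^\top\mathbf y}{n}$ and $\mathbf c_{\mathbf t}=L_{\mathbf t}^{-1}(\mathbf t\odot\mathbf a_{\mathbf t})$, where $\odot$ is the element-wise product and $I$ denotes an identity matrix of the appropriate size. Let $\mathscr P=\{1,\dots,p\}$ and $\mathscr Z_{\mathbf t}=\{j\in\mathscr P: t_j=0\}$. For $\mathbf u\in\mathbb{R}^p$, $(\mathbf u)_{+}$ (resp. $(\mathbf u)_0$) is the vector obtained by deleting the entries with indices in $\mathscr Z_{\mathbf t}$ (resp. in $\mathscr P\setminus\mathscr Z_{\mathbf t}$). For a $p\times p$ matrix $A$, $(A)_{+}$ (resp. $(A)_0$) is the matrix obtained by deleting the rows and columns with indices in $\mathscr Z_{\mathbf t}$ (resp. in $\mathscr P\setminus\mathscr Z_{\mathbf t}$). *)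

(* Defs.v *)
From HB Require Import structures.
From mathcomp Require Import all_boot all_order all_algebra.
Set Implicit Arguments. Unset Strict Implicit. Unset Printing Implicit Defensive.
Import Order.TTheory GRing.Theory Num.Theory.
Local Open Scope ring_scope.

Section Defs.
Variables (R : realFieldType) (n p : nat).
Variables (X : 'M[R]_(n, p)) (y : 'cV[R]_n) (delta : R) (t : 'cV[R]_p).

Definition hadamard (k : nat) (u v : 'cV[R]_k) : 'cV[R]_k :=
  \col_i (u i 0 * v i 0).

Definition Tmat : 'M[R]_p := diag_mx t^T.
Definition Xt : 'M[R]_(n, p) := X *m Tmat.
Definition Lt : 'M[R]_p :=
  (n%:R)^-1 *: (Xt^T *m Xt + delta *: (1%:M - Tmat *m Tmat)).
Definition betat : 'cV[R]_p := invmx Lt *m ((n%:R)^-1 *: (Xt^T *m y)).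
Definition at_ : 'cV[R]_p :=
  ((n%:R)^-1 *: (X^T *m X)) *m hadamard t betat - (n%:R)^-1 *: (X^T *m y).
Definition ct : 'cV[R]_p := invmx Lt *m hadamard t at_.

Definition Zset : {set 'I_p} := [set j | t j 0 == 0].
Definition Pset : {set 'I_p} := ~: Zset.
End Defs.

(* (u)_S : keep the entries indexed by S (in increasing order) *)
Definition subv (R : Type) (p : nat) (S : {set 'I_p}) (u : 'cV[R]_p)
  : 'cV[R]_#|S| := \col_(i < #|S|) u (enum_val i) 0.
Definition subm (R : Type) (p : nat) (S : {set 'I_p}) (A : 'M[R]_p)
  : 'M[R]_#|S| := \matrix_(i < #|S|, j < #|S|) A (enum_val i) (enum_val j).

(* Main.v *)
Require Import Defs.
From HB Require Import structures.
From mathcomp Require Import all_boot all_order all_algebra.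
From mathcomp Require Import ring lra.
Import Order.TTheory GRing.Theory Num.Theory.
Local Open Scope ring_scope.

Lemma subm_mulr (R : comNzRingType) p (S : {set 'I_p}) (A B : 'M[R]_p) :
  (forall k j, k \notin S -> j \in S -> B k j = 0) ->
  subm S (A *m B) = subm S A *m subm S B.
Proof.
move=> hB; apply/matrixP => i j; rewrite !mxE.
rewrite (bigID (fun k => k \in S)) /= [X in _ + X]big1 ?addr0.
  by rewrite big_enum_val; apply: eq_bigr => k _; rewrite !mxE.
by move=> k kS; rewrite hB ?mulr0 // enum_valP.
Qed.

Lemma subm_mull (R : comNzRingType) p (S : {set 'I_p}) (A B : 'M[R]_p) :
  (forall i k, i \in S -> k \notin S -> A i k = 0) ->
  subm S (A *m B) = subm S A *m subm S B.
Proof.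
move=> hA; apply/matrixP => i j; rewrite !mxE.
rewrite (bigID (fun k => k \in S)) /= [X in _ + X]big1 ?addr0.
  by rewrite big_enum_val; apply: eq_bigr => k _; rewrite !mxE.
by move=> k kS; rewrite hA ?mul0r // enum_valP.
Qed.

Lemma subv_mul (R : comNzRingType) p (S : {set 'I_p}) (A : 'M[R]_p) (v : 'cV[R]_p) :
  (forall k, k \notin S -> v k 0 = 0) ->
  subv S (A *m v) = subm S A *m subv S v.
Proof.
move=> hv; apply/matrixP => i j; rewrite !mxE ord1.
rewrite (bigID (fun k => k \in S)) /= [X in _ + X]big1 ?addr0.
  by rewrite big_enum_val; apply: eq_bigr => k _; rewrite !mxE.
by move=> k kS; rewrite hv ?mulr0.
Qed.

Lemma submD (R : comNzRingType) p (S : {set 'I_p}) (A B : 'M[R]_p) :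
  subm S (A + B) = subm S A + subm S B.
Proof. by apply/matrixP => i j; rewrite !mxE. Qed.
Lemma submB (R : comNzRingType) p (S : {set 'I_p}) (A B : 'M[R]_p) :
  subm S (A - B) = subm S A - subm S B.
Proof. by apply/matrixP => i j; rewrite !mxE. Qed.
Lemma submZ (R : comNzRingType) p (S : {set 'I_p}) a (A : 'M[R]_p) :
  subm S (a *: A) = a *: subm S A.
Proof. by apply/matrixP => i j; rewrite !mxE. Qed.
Lemma subm1 (R : comNzRingType) p (S : {set 'I_p}) :
  subm S (1%:M : 'M[R]_p) = 1%:M.
Proof. by apply/matrixP => i j; rewrite !mxE (inj_eq enum_val_inj). Qed.

Lemma invmx_left (R : fieldType) m (A B : 'M[R]_m) : A *m B = 1%:M -> invmx B = A.
Proof.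
move=> h; have [_ uB] := mulmx1_unit h.
by rewrite -[invmx B]mul1mx -h -mulmxA mulmxV // mulmx1.
Qed.
Section Main.
Variables (R : realFieldType) (n p : nat) (X : 'M[R]_(n, p)) (y : 'cV[R]_n)
  (delta : R) (t : 'cV[R]_p).
Hypotheses (n0 : (0 < n)%N) (d0 : 0 < delta)
  (ht : forall j : 'I_p, 0 <= t j 0 /\ t j 0 < 1).

Let T := Tmat t.
Let XX := X^T *m X.
Let D := delta *: (1%:M - T *m T).

Lemma Tij i j : T i j = t i 0 *+ (i == j).
Proof. by rewrite /T /Tmat !mxE. Qed.

Lemma hL : Lt X delta t = n%:R^-1 *: (T *m XX *m T + D).
Proof. by rewrite /Lt /Xt trmx_mul /Tmat tr_diag_mx !mulmxA. Qed.

Lemma TAT i j : (T *m XX *m T) i j = t i 0 * XX i j * t j 0.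
Proof. by rewrite /T /Tmat mul_mx_diag mul_diag_mx !mxE. Qed.

Lemma Dij i j : D i j = delta * (1 - t i 0 * t i 0) *+ (i == j).
Proof.
rewrite /D /T /Tmat mul_diag_mx !mxE.
case: (eqVneq i j) => [->|ne]; first by rewrite ?eqxx !mulr1n.
by rewrite ?(negbTE ne) !mulr0n mulr0 subr0 mulr0.
Qed.

Lemma Lrow j k : j \in Zset t -> Lt X delta t j k = n%:R^-1 * delta *+ (j == k).
Proof.
rewrite inE => /eqP tj; rewrite hL mxE mxE TAT Dij tj !mul0r add0r subr0 mulr1.
by case: eqP; rewrite ?mulr0n ?mulr1n ?mulr0.
Qed.

Lemma Lcol j k : j \in Zset t -> Lt X delta t k j = n%:R^-1 * delta *+ (j == k).
Proof.
move=> jZ; have := jZ; rewrite inE => /eqP tj; rewrite hL mxE mxE TAT Dij tj !mulr0 add0r.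
case: (eqVneq j k) => [<-|ne]; first by rewrite tj mulr0 subr0 ?mulr1n mulr1.
by rewrite !mulr0n mulr0.
Qed.

Lemma Lunit : Lt X delta t \in unitmx.
Proof.
rewrite unitmxE unitfE; apply/negP => /det0P [v vn0 vL].
pose B := X *m T.
have e : v *m Lt X delta t *m v^T =
   n%:R^-1 *: ((B *m v^T)^T *m (B *m v^T) + v *m D *m v^T).
  have trT : T^T = T by rewrite /T /Tmat tr_diag_mx.
  by rewrite hL /B !trmx_mul trmxK trT -scalemxAr -scalemxAl !mulmxDr !mulmxDl /XX !mulmxA.
have dpos k : 0 < delta * (1 - t k 0 * t k 0).
  have [h1 h2] := ht k; apply: mulr_gt0 => //; nra.
have := congr1 (fun M : 'M[R]_1 => M 0 0) e; rewrite vL mul0mx !mxE => /esym/eqP.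
rewrite mulf_eq0 invr_eq0 pnatr_eq0 => /orP[/eqP n00|]; first by move: n0; rewrite n00.
set s1 := \sum_j (B *m v^T)^T 0 j * _; set s2 := \sum_j (v *m D) 0 j * _.
have s1ge : 0 <= s1 by rewrite /s1 sumr_ge0 // => i _; rewrite [X in X * _]mxE -expr2 sqr_ge0.
have s2e : s2 = \sum_j v 0 j * (delta * (1 - t j 0 * t j 0)) * v 0 j.
  rewrite /s2; apply: eq_bigr => j _; rewrite mxE [v^T j 0]mxE.
  rewrite (bigD1 j) //= big1 ?addr0; first by rewrite Dij eqxx mulr1n.
  by move=> k kj; rewrite Dij (negbTE kj) mulr0n mulr0.
have tge j : 0 <= v 0 j * (delta * (1 - t j 0 * t j 0)) * v 0 j.
  by rewrite mulrC mulrA -expr2 mulr_ge0 ?sqr_ge0 // ltW.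
have s2ge : 0 <= s2 by rewrite s2e sumr_ge0.
rewrite paddr_eq0 // => /andP [_ /eqP s20].
move/eqP: vn0; apply; apply/matrixP => i j.
rewrite ord1 mxE; have := psumr_eq0P (fun j _ => tge j) (etrans (esym s2e) s20) (i := j) isT.
by rewrite mulrC mulrA -expr2 => /eqP; rewrite mulf_eq0 (gt_eqF (dpos j)) orbF sqrf_eq0 => /eqP.
Qed.

Lemma Linv_row j k : j \in Zset t ->
  invmx (Lt X delta t) j k = n%:R / delta * (j == k)%:R.
Proof.
move=> jZ; have := congr1 (fun M : 'M[R]_p => M j k) (mulmxV Lunit).
rewrite !mxE (bigD1 j) //= big1 ?addr0 => [|m mj]; last first.
  by rewrite Lrow // eq_sym (negbTE mj) mulr0n mul0r.
rewrite Lrow // eqxx mulr1n => <-.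
have nn0 : n%:R != 0 :> R by rewrite pnatr_eq0 -lt0n n0.
field; rewrite nn0 /=; exact: lt0r_neq0.
Qed.

Lemma ZP k : (k \notin Pset t) = (k \in Zset t).
Proof. by rewrite /Pset in_setC negbK. Qed.

Lemma invP : subm (Pset t) (invmx (Lt X delta t)) = invmx (subm (Pset t) (Lt X delta t)).
Proof.
apply/esym/invmx_left; rewrite -subm_mulr ?mulVmx ?Lunit ?subm1 //.
move=> k j; rewrite ZP => kZ jP; rewrite Lrow //.
case: eqP => [e|]; last by rewrite mulr0n.
by move: jP; rewrite -e /Pset in_setC kZ.
Qed.

Lemma Gen (u : 'cV[R]_p) :
  subv (Zset t) (invmx (Lt X delta t) *m hadamard t u) = 0 /\ subv (Pset t) (invmx (Lt X delta t) *m hadamard t u) =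
  invmx (subm (Pset t) (Lt X delta t)) *m hadamard (subv (Pset t) t) (subv (Pset t) u).
Proof.
split.
  apply/matrixP => i j; rewrite /hadamard !mxE (bigD1 (enum_val i)) //= big1 ?addr0.
    have := enum_valP i; rewrite inE mxE => /eqP ->.
    by rewrite mul0r mulr0.
  by move=> k ki; rewrite Linv_row ?enum_valP // eq_sym (negbTE ki) mulr0 mul0r.
rewrite subv_mul; last by move=> k; rewrite ZP inE mxE => /eqP ->; rewrite mul0r.
rewrite invP; congr (_ *m _); apply/matrixP => i j; by rewrite !mxE.
Qed.

End Main.

Theorem theorem6 (R : realFieldType) (n p : nat)
  (X : 'M[R]_(n, p)) (y : 'cV[R]_n) (delta : R) (t : 'cV[R]_p) :
  (0 < n)%N -> (0 < p)%N -> 0 < delta ->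
  (forall j : 'I_p, 0 <= t j 0 /\ t j 0 < 1) ->
  let P := Pset t in
  let Z := Zset t in
  let L := Lt X delta t in
  let Tp := subm P (Tmat t) in
  subm P L =
    (n%:R)^-1 *: (Tp *m subm P (X^T *m X) *m Tp + delta *: (1%:M - Tp *m Tp))
  /\ (subm Z (invmx L) = (n%:R / delta) *: 1%:M
      /\ subm P (invmx L) = invmx (subm P L))
  /\ (subv Z (betat X y delta t) = 0
      /\ subv P (betat X y delta t) =
         invmx (subm P L) *m hadamard (subv P t) (subv P ((n%:R)^-1 *: (X^T *m y))))
  /\ (subv Z (ct X y delta t) = 0
      /\ subv P (ct X y delta t) =
         invmx (subm P L) *m hadamard (subv P t) (subv P (at_ X y delta t))).
Proof.
move=> n0 p0 d0 ht P Z L Tp.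
have Tl : forall i k, i \in P -> k \notin P -> Tmat t i k = 0.
  move=> i k iP kP; rewrite !mxE; case: eqP => [e|]; last by rewrite mulr0n.
  by move: kP; rewrite -e iP.
have Tr : forall k j, k \notin P -> j \in P -> Tmat t k j = 0.
  move=> k j kP jP; rewrite !mxE; case: eqP => [e|]; last by rewrite mulr0n.
  by move: kP; rewrite e jP.
split.
  rewrite /L hL submZ submD submZ submB subm1.
  by rewrite subm_mulr // subm_mull // subm_mulr.
split.
  split; last exact: invP.
  apply/matrixP => i j; rewrite !mxE Linv_row ?enum_valP //.
  by rewrite (inj_eq enum_val_inj).
have eb : betat X y delta t = invmx L *m hadamard t ((n%:R)^-1 *: (X^T *m y)).
  rewrite /betat /Xt trmx_mul /Tmat tr_diag_mx -mulmxA mul_diag_mx; congr (_ *m _).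
  by apply/matrixP => i j; rewrite !mxE ord1 mulrCA.
split; first by rewrite eb; exact: Gen.
exact: Gen.
Qed.
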